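(* In the abstract boundary problem setting with an invertible reference operator described in the context, the map $\Gamma_0\oplus\bm\Gamma_1:\mathcal D(T^* )\to K'\oplus K$ is surjective.
   Context: Inner products are linear in the first argument and conjugate-linear in the second. Let $H_0$ be a separable Hilbert space with inner product $\langle\cdot,\cdot\rangle$, let $T$ be a closed densely defined symmetric operator in $H_0$ with adjoint $T^*$, and equip $\mathcal D(T^* )$ with the graph norm. Let $H_1\subset H_0$ be a dense subspace which is a Hilbert space in its own right with bounded inclusion $H_1\to H_0$. Let $K^\partial$ be a separable Hilbert space with inner product $\langle\cdot,\cdot\rangle_\partial$ and $K\subset K^\partial$ a dense subspace which is a Hilbert space in its own right with bounded inclusion. Let $K'$ be the space of continuous anti-linear functionals on $K$ (a Hilbert space with the dual norm); $K^\partial$ is regarded as a dense subspace of $K'$ via $y\mapsto(x\mapsto\langle y,x\rangle_\partial)$, so $K\subset K^\partial\subset K'$. For $y\in K'$, $x\in K$ put $\langle y,x\rangle_{K',K}=y(x)$ and $\langle x,y\rangle_{K,K'}=\overline{y(x)}$; these agree with $\langle\cdot,\cdot\rangle_\partial$ when $y\in K^\partial$. Standing assumptions: $H_1\subset\mathcal D(T^* )$ and $H_1$ is dense in $\mathcal D(T^* )$ in the graph norm; $T^*|_{H_1}:H_1\to H_0$ is bounded; $\gamma_0,\gamma_1:H_1\to K$ are bounded linear operators such that $\gamma=\gamma_0\oplus\gamma_1:H_1\to K\oplus K$ is surjective; $\operatorname{Ker}\gamma$ is dense in $H_0$ and $\mathcal D(T)=\operatorname{Ker}\gamma$; and the Lagrange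 identity $\langle T^*u,v\rangle-\langle u,T^*v\rangle=\langle\gamma_1u,\gamma_0v\rangle_\partial-\langle\gamma_0u,\gamma_1v\rangle_\partial$ holds for all $u,v\in H_1$. $\Gamma_0,\Gamma_1:\mathcal D(T^* )\to K'$ denote the (existing, unique) continuous extensions of $\gamma_0,\gamma_1$; they satisfy $\langle T^*u,v\rangle-\langle u,T^*v\rangle=\langle\Gamma_1u,\Gamma_0v\rangle_{K',K}-\langle\Gamma_0u,\Gamma_1v\rangle_{K',K}$ for $u\in\mathcal D(T^* )$, $v\in H_1$. Moreover $A$ is a self-adjoint operator in $H_0$ with $T\subset A\subset T^*$, $\mathcal D(A)=\operatorname{Ker}\gamma_0$ (so $\mathcal D(A)\subset H_1$), and $A$ has a bounded everywhere defined inverse. Then $\mathcal D(T^* )=\mathcal D(A)\dotplus\operatorname{Ker}T^*$ topologically, with projections $p=A^{-1}T^*$ onto $\mathcal D(A)$ and $k=1-p$ onto $\operatorname{Ker}T^*$, and $\Gamma_0$ restricts to a topological isomorphism $\operatorname{Ker}T^*\to K'$; let $\bm\gamma(0):K'\to\operatorname{Ker}T^*$ be its inverse, $M(0)=\Gamma_1\circ\bm\gamma(0):K'\to K'$, and define the reduced boundary operator $\bm\Gamma_1=\Gamma_1-M(0)\circ\Gamma_0:\mathcal D(T^* )\to K'$; its image lies in $K$. *)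

(* Defs.v *)
From HB Require Import structures.
From mathcomp Require Import all_boot all_order all_algebra.
From mathcomp Require Import reals.
From mathcomp Require Import complex.
Set Implicit Arguments. Unset Strict Implicit. Unset Printing Implicit Defensive.
Import Order.TTheory GRing.Theory Num.Theory.
Local Open Scope ring_scope.

Section Hilbert.
Variable R : realType.
Local Notation C := R[i].

Definition inner_product (V : lmodType C) (ip : V -> V -> C) : Prop :=
  [/\ (forall (a : C) (x y z : V), ip (a *: x + y) z = a * ip x z + ip y z),
      (forall x y : V, ip y x = conjc (ip x y)),
      (forall x : V, 0 <= complex.Re (ip x x)) &
      (forall x : V, ip x x = 0 -> x = 0)].

Definition hnorm (V : lmodType C) (ip : V -> V -> C) (x : V) : R :=
  Num.sqrt (complex.Re (ip x x)).

Definition converges (V : lmodType C) (ip : V -> V -> C) (u : nat -> V) (l : V) :=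
  forall e : R, 0 < e -> exists N, forall n, (N <= n)%N -> hnorm ip (u n - l) < e.

Definition cauchy (V : lmodType C) (ip : V -> V -> C) (u : nat -> V) :=
  forall e : R, 0 < e -> exists N, forall m n, (N <= m)%N -> (N <= n)%N ->
    hnorm ip (u m - u n) < e.

Definition hilbert (V : lmodType C) (ip : V -> V -> C) : Prop :=
  inner_product ip /\
  forall u : nat -> V, cauchy ip u -> exists l, converges ip u l.

Definition separable (V : lmodType C) (ip : V -> V -> C) : Prop :=
  exists d : nat -> V, forall x e, 0 < e -> exists n, hnorm ip (x - d n) < e.

Definition dense_in (V : lmodType C) (ip : V -> V -> C) (D : V -> Prop) : Prop :=
  forall x e, 0 < e -> exists y, D y /\ hnorm ip (x - y) < e.

Definition subspace (V : lmodType C) (D : V -> Prop) : Prop :=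
  D 0 /\ forall (a : C) x y, D x -> D y -> D (a *: x + y).

Definition linear_on (V W : lmodType C) (D : V -> Prop) (f : V -> W) : Prop :=
  forall (a : C) x y, D x -> D y -> f (a *: x + y) = a *: f x + f y.

(** An (unbounded) operator in V is a pair (D, f) : domain, and a function
    whose values outside D are irrelevant. *)
Definition symmetric_op (V : lmodType C) (ip : V -> V -> C) (D : V -> Prop)
  (f : V -> V) : Prop :=
  forall u v, D u -> D v -> ip (f u) v = ip u (f v).

Definition closed_op (V : lmodType C) (ip : V -> V -> C) (D : V -> Prop)
  (f : V -> V) : Prop :=
  forall (u : nat -> V) x y, (forall n, D (u n)) -> converges ip u x ->
    converges ip (fun n => f (u n)) y -> D x /\ f x = y.

Definition is_adjoint (V : lmodType C) (ip : V -> V -> C) (D : V -> Prop)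
  (f : V -> V) (Ds : V -> Prop) (fs : V -> V) : Prop :=
  forall v w, (Ds v /\ fs v = w) <-> (forall u, D u -> ip (f u) v = ip u w).

Definition op_ext (V : lmodType C) (D1 : V -> Prop) (f1 : V -> V)
  (D2 : V -> Prop) (f2 : V -> V) : Prop :=
  forall u, D1 u -> D2 u /\ f2 u = f1 u.

Definition graph_norm (V : lmodType C) (ip : V -> V -> C) (f : V -> V) (u : V) : R :=
  Num.sqrt (hnorm ip u ^+ 2 + hnorm ip (f u) ^+ 2).

Definition bounded_map (V W : lmodType C) (ipV : V -> V -> C) (ipW : W -> W -> C)
  (f : V -> W) : Prop :=
  exists c : R, forall x, hnorm ipW (f x) <= c * hnorm ipV x.

Definition antidual (K : lmodType C) (ipK : K -> K -> C) (phi : K -> C) : Prop :=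
  (forall (a : C) x y, phi (a *: x + y) = conjc a * phi x + phi y) /\
  exists c : R, forall x, ComplexField.Normc.normc (phi x) <= c * hnorm ipK x.

End Hilbert.

(* Main.v *)
Require Import Defs.
From HB Require Import structures.
From mathcomp Require Import all_boot all_order all_algebra.
From mathcomp Require Import reals.
From mathcomp Require Import complex.
From mathcomp Require Import boolp classical_sets.
From mathcomp Require Import ring lra.
Import Order.TTheory GRing.Theory Num.Theory.
Local Open Scope ring_scope.
Set Implicit Arguments. Unset Strict Implicit. Unset Printing Implicit Defensive.

Section Basic.
Variable R : realType.
Local Notation C := R[i].
Variables (V : lmodType C) (ip : V -> V -> C).
Hypothesis Hip : inner_product ip.

Lemma cjM (a b : C) : conjc (a * b) = conjc a * conjc b.
Proof. exact: rmorphM. Qed.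
Lemma cjD (a b : C) : conjc (a + b) = conjc a + conjc b.
Proof. exact: rmorphD. Qed.
Lemma cjN (a : C) : conjc (- a) = - conjc a.
Proof. exact: rmorphN. Qed.
Lemma cjB (a b : C) : conjc (a - b) = conjc a - conjc b.
Proof. exact: rmorphB. Qed.
Lemma cjV (a : C) : conjc (a^-1) = (conjc a)^-1.
Proof. exact: conjc_inv. Qed.
Lemma rcX (a : R) n : (a%:C%C : C) ^+ n = (a ^+ n)%:C%C.
Proof. by rewrite rmorphXn. Qed.
Lemma rcM (a b : R) : ((a * b)%:C%C : C) = a%:C%C * b%:C%C.
Proof. by rewrite rmorphM. Qed.
Lemma rcD (a b : R) : ((a + b)%:C%C : C) = a%:C%C + b%:C%C.
Proof. by rewrite rmorphD. Qed.
Lemma cj0 : conjc (0 : C) = 0.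
Proof. exact: rmorph0. Qed.

Lemma ip_lin a x y z : ip (a *: x + y) z = a * ip x z + ip y z.
Proof. by case: Hip. Qed.
Lemma ip_sym x y : ip y x = conjc (ip x y).
Proof. by case: Hip. Qed.
Lemma ip_pos x : 0 <= complex.Re (ip x x).
Proof. by case: Hip. Qed.
Lemma ip_def x : ip x x = 0 -> x = 0.
Proof. by case: Hip => _ _ _; apply. Qed.

Lemma ip0l z : ip 0 z = 0.
Proof.
have h := ip_lin 1 0 0 z; rewrite scaler0 addr0 mul1r in h.
by apply: (@addrI _ (ip 0 z)); rewrite addr0 -h.
Qed.
Lemma ipDl x y z : ip (x + y) z = ip x z + ip y z.
Proof. by rewrite -[x]scale1r ip_lin mul1r scale1r. Qed.
Lemma ipZl a x z : ip (a *: x) z = a * ip x z.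
Proof. by rewrite -[a *: x]addr0 ip_lin ip0l addr0. Qed.
Lemma ipNl x z : ip (- x) z = - ip x z.
Proof. by rewrite -scaleN1r ipZl mulN1r. Qed.
Lemma ipBl x y z : ip (x - y) z = ip x z - ip y z.
Proof. by rewrite ipDl ipNl. Qed.
Lemma ip0r z : ip z 0 = 0.
Proof. by rewrite ip_sym ip0l rmorph0. Qed.
Lemma ipDr x y z : ip z (x + y) = ip z x + ip z y.
Proof. by rewrite [LHS]ip_sym ipDl rmorphD (ip_sym x z) (ip_sym y z). Qed.
Lemma ipZr a x z : ip z (a *: x) = conjc a * ip z x.
Proof. by rewrite [LHS]ip_sym ipZl rmorphM (ip_sym x z). Qed.
Lemma ipNr x z : ip z (- x) = - ip z x.
Proof. by rewrite [LHS]ip_sym ipNl rmorphN (ip_sym x z). Qed.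
Lemma ipBr x y z : ip z (x - y) = ip z x - ip z y.
Proof. by rewrite ipDr ipNr. Qed.

Lemma ipxx_real x : ip x x = (complex.Re (ip x x))%:C%C.
Proof.
have := ip_sym x x; case: (ip x x) => a b /= [] /eqP.
rewrite -subr_eq0 opprK -mulr2n mulrn_eq0 /= => /eqP ->.
by [].
Qed.

Lemma ipxx_ge0 x : 0 <= ip x x.
Proof. by rewrite ipxx_real ler0c ip_pos. Qed.

Lemma conj_real {c : C} : 0 <= c -> conjc c = c.
Proof. by case: c => a b; rewrite lecE /= => /andP[/eqP -> _]; rewrite oppr0. Qed.

Lemma proj_id x y : ip y y != 0 ->
  ip (x - (ip x y / ip y y) *: y) (x - (ip x y / ip y y) *: y)
  = ip x x - `|ip x y| ^+ 2 / ip y y.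
Proof.
move=> nz.
rewrite ipBl !ipBr !ipZl !ipZr.
rewrite sqr_normc cjM cjV (conj_real (ipxx_ge0 y : 0 <= ip y y)).
rewrite -(ip_sym x y).
set s := ip x y; set t := ip y x; set q := ip y y.
by field.
Qed.

Lemma CS_C x y : `|ip x y| ^+ 2 <= ip x x * ip y y.
Proof.
have [y0|nz] := eqVneq (ip y y) 0.
  by rewrite (ip_def y0) ip0r ip0l normr0 expr0n /= mulr0.
have qpos : 0 < ip y y by rewrite lt_def nz ipxx_ge0.
have := ipxx_ge0 (x - (ip x y / ip y y) *: y).
rewrite proj_id // subr_ge0 ler_pdivrMr //.
Qed.

Local Notation N := (hnorm ip).

Lemma N_ge0 x : 0 <= N x.
Proof. exact: sqrtr_ge0. Qed.

Lemma N_sqr x : N x ^+ 2 = complex.Re (ip x x).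
Proof. by rewrite /hnorm sqr_sqrtr // ip_pos. Qed.

Lemma N_sqrC x : (N x)%:C%C ^+ 2 = ip x x.
Proof. by rewrite rcX N_sqr -ipxx_real. Qed.

Lemma normcE' (z : C) : `|z| = (ComplexField.Normc.normc z)%:C%C.
Proof. by rewrite normc_def; case: z. Qed.

Lemma normc_ge0 (z : C) : 0 <= ComplexField.Normc.normc z.
Proof. by case: z => a b; exact: sqrtr_ge0. Qed.

Lemma CS x y : ComplexField.Normc.normc (ip x y) <= N x * N y.
Proof.
rewrite -(ler_pXn2r (_ : (0 < 2)%N)) ?nnegrE ?normc_ge0 ?mulr_ge0 ?N_ge0 //.
rewrite -lecR -rcX -normcE' exprMn rcM -!rcX !N_sqrC.
exact: CS_C.
Qed.

Local Notation nc := (@ComplexField.Normc.normc R).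

Lemma ReD (a b : C) : complex.Re (a + b) = complex.Re a + complex.Re b.
Proof. by case: a; case: b. Qed.
Lemma Re_cj (a : C) : complex.Re (conjc a) = complex.Re a.
Proof. by case: a. Qed.
Lemma Re_le_nc (z : C) : complex.Re z <= nc z.
Proof.
case: z => a b /=; apply: (le_trans (ler_norm a)).
by rewrite -sqrtr_sqr ler_wsqrtr // lerDl sqr_ge0.
Qed.
Lemma nc_cj (z : C) : nc (conjc z) = nc z.
Proof. by case: z => a b /=; rewrite sqrrN. Qed.
Lemma nc_real (r : R) : nc (r%:C%C) = `|r|.
Proof. by rewrite /= expr0n /= addr0 sqrtr_sqr. Qed.

Lemma N_tri x y : N (x + y) <= N x + N y.
Proof.
rewrite -(ler_pXn2r (_ : (0 < 2)%N)) ?nnegrE ?addr_ge0 ?N_ge0 //.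
rewrite N_sqr ipDl !ipDr ReD ReD ReD (ip_sym x y) Re_cj -!N_sqr sqrrD.
have h := Re_le_nc (ip x y); have h2 := CS x y; lra.
Qed.

Lemma N_scale a x : N (a *: x) = nc a * N x.
Proof.
rewrite /hnorm ipZl ipZr mulrA -sqr_normc normcE' rcX ipxx_real -rcM /=.
by rewrite sqrtrM ?sqr_ge0 // sqrtr_sqr ger0_norm // normc_ge0.
Qed.

Lemma N_opp x : N (- x) = N x.
Proof.
rewrite -scaleN1r N_scale.
have -> : nc (-1) = 1.
  have -> : (-1 : C) = (-1 : R)%:C%C by apply/eqP; rewrite eq_complex /= oppr0 !eqxx.
  by rewrite nc_real normrN1.
by rewrite mul1r.
Qed.

Lemma N_symB x y : N (x - y) = N (y - x).
Proof. by rewrite -N_opp opprB. Qed.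

Lemma N_0 : N 0 = 0.
Proof. by rewrite /hnorm ip0l /= sqrtr0. Qed.

Lemma N_eq0 x : N x = 0 -> x = 0.
Proof.
move=> h; apply: ip_def; rewrite -N_sqrC h /= expr0n //.
Qed.

Lemma N_tri3 x y z : N (x - z) <= N (x - y) + N (y - z).
Proof. by have := N_tri (x - y) (y - z); rewrite addrA subrK. Qed.

Lemma ReN (a : C) : complex.Re (- a) = - complex.Re a.
Proof. by case: a. Qed.

Lemma para a b : N (a + b) ^+ 2 + N (a - b) ^+ 2 = 2 * N a ^+ 2 + 2 * N b ^+ 2.
Proof.
rewrite !N_sqr !ipDl !ipDr !ipNl !ipNr !ReD !ReN; lra.
Qed.

Lemma N_le_ip x y : N x <= N y -> ip x x <= ip y y.
Proof.
move=> h; rewrite -!N_sqrC !rcX lecR.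
by rewrite ler_pXn2r ?nnegrE ?N_ge0.
Qed.
End Basic.
Notation N := hnorm.

Fixpoint rec_seq (A : Type) (a0 : A) (st : nat -> A -> A) (k : nat) : A :=
  match k with 0 => a0 | S k' => st k' (rec_seq a0 st k') end.

Section Reals.
Variable R : realType.

Lemma le_eps (a b : R) : (forall e : R, 0 < e -> a <= b + e) -> a <= b.
Proof.
move=> h; rewrite leNgt; apply/negP => ab.
have e0 : 0 < (a - b) / 2%:R by rewrite divr_gt0 // subr_gt0.
have := h _ e0; lra.
Qed.

Lemma le0_eps (a k : R) : (forall e : R, 0 < e -> a <= e * k) -> a <= 0.
Proof.
move=> h; rewrite leNgt; apply/negP => a0.
have kp : 0 < `|k| + 1 by rewrite ltr_pwDr // normr_ge0.
set t := a / (`|k| + 1).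
have t0 : 0 < t by rewrite divr_gt0.
have h1 := h t t0.
have h2 : t * k <= t * `|k| by rewrite ler_wpM2l ?ler_norm // ltW.
have h3 : t * `|k| + t * 1 = a by rewrite -mulrDr /t divfK // lt0r_neq0.
rewrite mulr1 in h3; lra.
Qed.

Lemma pow2_big (e : R) : 0 < e -> exists k, 1 < e * (2 ^ k)%:R.
Proof.
move=> e0; have ei : 0 <= e^-1 by rewrite invr_ge0 ltW.
have h := archi_boundP ei.
set n := Num.Def.archi_bound _ in h.
exists n; rewrite -ltr_pdivrMl // mulr1.
apply: (lt_trans h); rewrite ltr_nat ltn_expl //.
Qed.
End Reals.

Section Baire.
Variables (R : realType) (V : lmodType R[i]) (ip : V -> V -> R[i]).
Hypothesis Hip : inner_product ip.
Hypothesis Hc : forall u, cauchy ip u -> exists l, converges ip u l.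
Local Notation N := (N ip).

Lemma baire (P : nat -> V -> Prop) : (forall f, exists n, P n f) ->
  exists n f0 r, 0 < r /\ forall f, N (f - f0) < r -> forall e, 0 < e ->
     exists g, P n g /\ N (f - g) < e.
Proof.
move=> cov; apply: contrapT => nB.
have H : forall n f0 r, 0 < r -> exists f, N (f - f0) < r /\
    exists2 e, 0 < e & forall g, P n g -> e <= N (f - g).
  move=> n f0 r r0; apply: contrapT => nf; apply: nB; exists n, f0, r; split => // f fr e e0.
  apply: contrapT => ng; apply: nf; exists f; split => //; exists e => // g Pg.
  rewrite leNgt; apply/negP => lt; apply: ng; by exists g.
pose Q n (p q : V * R) := [/\ 0 < q.2, q.2 <= p.2 / 2, N (q.1 - p.1) + q.2 <= p.2 &
   forall g, N (g - q.1) <= q.2 -> ~ P n g].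
have step : forall (np : nat * (V * R)), exists q, 0 < np.2.2 -> Q np.1 np.2 q.
  case=> n [f0 r] /=; case: (boolP (0 < r)) => r0; last by exists (f0, r).
  have [f [fr [e e0 he]]] := H n f0 r r0.
  set d := r - N (f - f0).
  have d0 : 0 < d by rewrite subr_gt0.
  have Nf0 := N_ge0 ip (f - f0).
  exists (f, Num.min e d / 2) => _ /=.
  have m0 : 0 < Num.min e d by rewrite lt_min e0 d0.
  have me : Num.min e d <= e by rewrite ge_min lexx.
  have md : Num.min e d <= d by rewrite ge_min lexx orbT.
  split => /=.
  - by rewrite divr_gt0.
  - rewrite /d in md m0 me *; lra.
  - rewrite /d in md m0 me *; lra.
  - move=> g hg Pg; have := he g Pg; rewrite (N_symB Hip); lra.
have [st hst] := choice step.
pose s := rec_seq (0, 1) (fun k p => st (k, p)).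
have sS k : s k.+1 = st (k, s k) by [].
have hs : forall k, 0 < (s k).2 /\ Q k (s k) (s k.+1).
  elim=> [|k [r0 q]].
    have h0 : 0 < (s 0).2 by rewrite /= ltr01.
    by split => //; rewrite sS; apply: (hst (0%N, s 0)).
  have [q1 _ _ _] := q; split => //.
  by rewrite sS; apply: (hst (k.+1, s k.+1)).
pose u k := (s k).1.
pose r k := (s k).2.
have rpos k : 0 < r k by case: (hs k).
have mono : forall d k, N (u (k + d)%N - u k) + r (k + d)%N <= r k.
  elim=> [|d IH] k.
    by rewrite addn0 subrr (N_0 Hip) add0r.
  have [_ [_ _ h _]] := hs (k + d)%N.
  rewrite addnS; have := N_tri3 Hip (u (k + d).+1) (u (k + d)%N) (u k).
  rewrite /u /r in IH h *; have := IH k; lra.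
have geo k : r k * (2 ^ k)%:R <= 1.
  elim: k => [|k IH]; first by rewrite /r /= mulr1.
  have [_ [_ h _ _]] := hs k.
  rewrite expnS natrM.
  have h2 : 0 <= (2 ^ k)%:R :> R by rewrite ler0n.
  rewrite /r in IH h *.
  have : (s k.+1).2 * (2 ^ k)%:R <= (s k).2 / 2 * (2 ^ k)%:R by rewrite ler_wpM2r.
  have -> : (s k.+1).2 * (2%:R * (2 ^ k)%:R) = 2 * ((s k.+1).2 * (2 ^ k)%:R) by rewrite mulrA mulrCA mulrA.
  rewrite mulrAC; lra.
have small : forall e, 0 < e -> exists k, r k < e.
  move=> e e0; have [k hk] := pow2_big e0; exists k.
  have p2 : 0 < (2 ^ k)%:R :> R by rewrite ltr0n expn_gt0.
  rewrite -(ltr_pM2r p2); have := geo k; lra.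
have cau : cauchy ip u.
  move=> e e0; have e2 : 0 < e / 2 by rewrite divr_gt0.
  have [k hk] := small _ e2; exists k => m n km kn.
  change (N (u m - u n) < e).
  have := mono (m - k)%N k; have := mono (n - k)%N k.
  rewrite !subnKC // => h1 h2.
  have := N_tri3 Hip (u m) (u k) (u n); rewrite (N_symB Hip (u k)).
  have := rpos m; have := rpos n; lra.
have [x hx] := Hc cau.
have xb : forall k, N (x - u k) <= r k.
  move=> k; apply: le_eps => e e0.
  have [M hM] := hx e e0.
  have h0 : N (u (maxn M k) - x) < e := hM (maxn M k) (leq_maxl _ _).
  have := mono (maxn M k - k)%N k; rewrite subnKC ?leq_maxr //.
  have := N_tri3 Hip x (u (maxn M k)) (u k); rewrite (N_symB Hip x (u (maxn M k))).
  have := rpos (maxn M k); lra.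
have [n Pn] := cov x.
have [_ [_ _ _ h]] := hs n.
by apply: (h x) => //; exact: xb.
Qed.
End Baire.

Section Riesz.
Variables (R : realType) (V : lmodType R[i]) (ip : V -> V -> R[i]).
Hypothesis Hip : inner_product ip.
Hypothesis Hc : forall u, cauchy ip u -> exists l, converges ip u l.
Local Notation N := (N ip).
Local Notation nc := (@ComplexField.Normc.normc R).

Local Open Scope classical_set_scope.
Definition epsn (k : nat) : R := (k.+1%:R)^-1.
Lemma epsn_gt0 k : 0 < epsn k.
Proof. by rewrite invr_gt0 ltr0n. Qed.
Lemma small_inv (t : R) : 0 < t -> exists K, forall k, (K <= k)%N -> epsn k < t.
Proof.
move=> t0; have ti : 0 <= t^-1 by rewrite invr_ge0 ltW.
have h := archi_boundP ti; set K := Num.Def.archi_bound _ in h.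
exists K => k Kk; rewrite /epsn.
rewrite -(ltf_pV2 (_ : 0 < t)) ?posrE ?ltr0n ?invr_gt0 // invrK.
apply: (lt_le_trans h); rewrite ler_nat; exact: leqW.
Qed.

Lemma riesz (l : V -> R[i]) (c : R) :
  (forall a x y, l (a *: x + y) = a * l x + l y) ->
  (forall x, nc (l x) <= c * N x) ->
  exists z, forall f, l f = ip f z.
Proof.
move=> llin lbd.
have l0 : l 0 = 0.
  have h := llin 1 0 0; rewrite scaler0 addr0 mul1r in h.
  by apply: (@addrI _ (l 0)); rewrite addr0 -h.
have lZ a x : l (a *: x) = a * l x by rewrite -[a *: x]addr0 llin l0 addr0.
have lD x y : l (x + y) = l x + l y by rewrite -[x]scale1r llin mul1r scale1r.
have lN x : l (- x) = - l x by rewrite -scaleN1r lZ mulN1r.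
have lB x y : l (x - y) = l x - l y by rewrite lD lN.
have [c' [c'0 lbd']] : exists c', 0 <= c' /\ forall x, nc (l x) <= c' * N x.
  exists (Num.max c 0); split; first by rewrite le_max lexx orbT.
  move=> x; apply: (le_trans (lbd x)); rewrite ler_wpM2r ?N_ge0 //.
  by rewrite le_max lexx.
case: (pselect (forall f, l f = 0)) => [lz|].
  by exists 0 => f; rewrite lz (ip0r Hip).
move=> /existsNP [f1 f1n].
pose f2 := (l f1)^-1 *: f1.
have lf2 : l f2 = 1 by rewrite lZ mulVf //; apply/eqP.
pose E := [set t | exists n, l n = 0 /\ t = N (f2 - n)].
have E0 : E (N f2) by exists 0; rewrite subr0.
have Elb : lbound E 0 by move=> t [n [_ ->]]; exact: N_ge0.
have hinf : has_inf E by split; [exists (N f2) | exists 0].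
set d := inf E.
have d0 : 0 <= d by apply: lb_le_inf => //; exists (N f2).
have dlb n : l n = 0 -> d <= N (f2 - n).
  by move=> ln; apply: ge_inf; [exists 0 | exists n].
have seqex : forall k : nat, exists n, l n = 0 /\ N (f2 - n) < d + epsn k.
  move=> k; have [t [n [ln ->]] ht] := inf_adherent (epsn_gt0 k) hinf.
  by exists n.
have [ns hns] := choice seqex.
have cau : cauchy ip ns.
  move=> e e0.
  have e2 : 0 < e ^+ 2 / (8 * d + 4) by rewrite divr_gt0 ?exprn_gt0 //; lra.
  have [K1 hK1] := small_inv e2.
  have [K2 hK2] := small_inv (ltr01 : (0 : R) < 1).
  exists (maxn K1 K2) => m n mK nK.
  have [l1 h1] := hns m; have [l2 h2] := hns n.
  set a := f2 - ns m; set b := f2 - ns n.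
  have ab : a - b = ns n - ns m by rewrite /a /b opprB addrC addrA subrK.
  have apb : a + b = 2%:R *: (f2 - (2%:R^-1 *: (ns m + ns n))).
    rewrite scalerBr [X in _ - X]scalerA divff ?pnatr_eq0 // scale1r scaler_nat /a /b.
    by rewrite mulr2n opprD !addrA; congr (_ - _); rewrite addrAC.
  have hm : N (a + b) >= 2 * d.
    rewrite apb (N_scale Hip) //.
    have -> : nc (2%:R) = 2.
      have -> : (2%:R : R[i]) = (2%:R : R)%:C%C by rewrite -(rmorph_nat (real_complex R)).
      by rewrite nc_real ger0_norm.
    rewrite ler_pM2l ?ltr0n //; apply: dlb.
    by rewrite lZ lD l1 l2 addr0 mulr0.
  have pa := para Hip a b; rewrite ab in pa.
  have i1 : epsn m < e ^+ 2 / (8 * d + 4) by apply: hK1; exact: (leq_trans (leq_maxl _ _) mK).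
  have i2 : epsn n < e ^+ 2 / (8 * d + 4) by apply: hK1; exact: (leq_trans (leq_maxl _ _) nK).
  have j1 : epsn m < 1 by apply: hK2; exact: (leq_trans (leq_maxr _ _) mK).
  have j2 : epsn n < 1 by apply: hK2; exact: (leq_trans (leq_maxr _ _) nK).
  have p1 := epsn_gt0 m; have p2 := epsn_gt0 n.
  set x1 := epsn m in h1 i1 j1 p1; set x2 := epsn n in h2 i2 j2 p2.
  set q := e ^+ 2 / (8 * d + 4) in i1 i2.
  have d84 : 0 < 8 * d + 4 by lra.
  have qe : q * (8 * d + 4) = e ^+ 2 by rewrite /q divfK // lt0r_neq0.
  have Na := N_ge0 ip a; have Nb := N_ge0 ip b.
  have s1 : N a ^+ 2 <= (d + x1) ^+ 2 by rewrite ler_pXn2r ?nnegrE ?N_ge0 //; lra.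
  have s2 : N b ^+ 2 <= (d + x2) ^+ 2 by rewrite ler_pXn2r ?nnegrE ?N_ge0 //; lra.
  have s3 : (2 * d) ^+ 2 <= N (a + b) ^+ 2 by rewrite ler_pXn2r ?nnegrE ?N_ge0 //; lra.
  change (N (ns m - ns n) < e); rewrite (N_symB Hip (ns m)) -(ltr_pXn2r (_ : (0 < 2)%N)) ?nnegrE ?N_ge0 ?ltW //.
  have : N (ns n - ns m) ^+ 2 <= 4 * d * (x1 + x2) + 2 * x1 ^+ 2 + 2 * x2 ^+ 2 by nra.
  have : 4 * d * (x1 + x2) + 2 * x1 ^+ 2 + 2 * x2 ^+ 2 < e ^+ 2 by nra.
  lra.
have [ns' hns'] := Hc cau.
have lns' : l ns' = 0.
  apply: ComplexField.Normc.eq0_normc; apply/eqP; rewrite eq_le normc_ge0 andbT.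
  apply: (@le0_eps _ _ c') => e e0.
  have [K hK] := hns' e e0.
  have : N (ns K - ns') < e := hK K (leqnn K).
  have [lK _] := hns K.
  have := lbd' (ns K - ns'); rewrite lB lK sub0r.
  have -> : nc (- l ns') = nc (l ns') by case: (l ns') => ? ? /=; rewrite !sqrrN.
  move=> h1 h2; apply: (le_trans h1); rewrite mulrC ler_wpM2r // ltW //.
pose e := f2 - ns'.
have le1 : l e = 1 by rewrite lB lf2 lns' subr0.
have Ne : N e <= d.
  apply: le_eps => t t0.
  have t2 : 0 < t / 2 by rewrite divr_gt0.
  have [K1 hK1] := hns' _ t2.
  have [K2 hK2] := small_inv t2.
  have h3 : N (ns (maxn K1 K2) - ns') < t / 2 := hK1 (maxn K1 K2) (leq_maxl _ _).
  have h2 := hK2 (maxn K1 K2) (leq_maxr _ _).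
  have [_ h] := hns (maxn K1 K2).
  have := N_tri3 Hip f2 (ns (maxn K1 K2)) ns'.
  rewrite /e; lra.
have emin n : l n = 0 -> N e <= N (e - n).
  move=> ln; apply: (le_trans Ne); rewrite /e -addrA -opprD; apply: dlb.
  by rewrite lD lns' ln addr0.
have orth n : l n = 0 -> ip e n = 0.
  move=> ln; have [n0|nz] := eqVneq (ip n n) 0.
    by rewrite (ip_def Hip n0) (ip0r Hip).
  have qpos : 0 < ip n n by rewrite lt_def nz; exact: ipxx_ge0.
  have ln' : l ((ip e n / ip n n) *: n) = 0 by rewrite lZ ln mulr0.
  have := N_le_ip Hip (emin _ ln').
  rewrite (proj_id Hip) // lerBrDr gerDl pmulr_lle0 ?invr_gt0 //.
  move=> h; have : `|ip e n| ^+ 2 = 0 by apply/eqP; rewrite eq_le h exprn_ge0 ?normr_ge0.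
  by move/eqP; rewrite expf_eq0 /= normr_eq0 => /eqP.
have ne : ip e e != 0.
  apply/eqP => /(ip_def Hip) e0; move: le1; rewrite e0 l0 => /eqP.
  by rewrite eq_sym oner_eq0.
exists ((ip e e)^-1 *: e) => f.
have w0 : l (f - l f *: e) = 0 by rewrite lB lZ le1 mulr1 subrr.
have := orth _ w0; rewrite (ipBr Hip) (ipZr Hip) => /eqP; rewrite subr_eq0 => /eqP h.
rewrite (ipZr Hip) cjV (conj_real (ipxx_ge0 Hip e)).
rewrite (ip_sym Hip e f) h.
rewrite cjM conjcK (conj_real (ipxx_ge0 Hip e)).
by rewrite mulrCA mulVf // mulr1.
Qed.
End Riesz.

Section Helpers.
Variable R : realType.
Local Notation C := R[i].
Local Notation nc := (@ComplexField.Normc.normc R).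

Lemma nc_ge0 (z : C) : 0 <= nc z.
Proof. exact: normc_ge0. Qed.
Lemma ncD (a b : C) : nc (a + b) <= nc a + nc b.
Proof. exact: le_normcD. Qed.
Lemma ncN (a : C) : nc (- a) = nc a.
Proof. exact: normcN. Qed.
Lemma ncB (a b : C) : nc (a - b) <= nc a + nc b.
Proof. by rewrite -(ncN b); exact: ncD. Qed.
Lemma nc_eq0 (a : C) : nc a <= 0 -> a = 0.
Proof.
move=> h; apply: ComplexField.Normc.eq0_normc; apply/eqP.
by rewrite eq_le h nc_ge0.
Qed.
Lemma ncM (a b : C) : nc (a * b) = nc a * nc b.
Proof. exact: ComplexField.Normc.normcM. Qed.
Lemma nc_cjc (a : C) : nc (conjc a) = nc a.
Proof. by case: a => x y /=; rewrite sqrrN. Qed.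

Definition w (eta : R) (k : nat) : R := eta / (2 ^ k)%:R.
Lemma w_gt0 eta k : 0 < eta -> 0 < w eta k.
Proof. by move=> e0; rewrite /w divr_gt0 // ltr0n expn_gt0. Qed.
Lemma wS eta k : w eta k.+1 = w eta k / 2.
Proof.
by rewrite /w expnS natrM invfM mulrA mulrAC.
Qed.
Lemma w_le eta k m : 0 <= eta -> (k <= m)%N -> w eta m <= w eta k.
Proof.
move=> e0 km; rewrite /w ler_wpM2l // lef_pV2 ?posrE ?ltr0n ?expn_gt0 //.
by rewrite ler_nat leq_pexp2l.
Qed.
Lemma w_small eta t : 0 < eta -> 0 < t -> exists K, forall k, (K <= k)%N -> w eta k < t.
Proof.
move=> e0 t0; have [K hK] := pow2_big (divr_gt0 t0 e0).
exists K => k Kk; apply: (le_lt_trans (w_le (ltW e0) Kk)).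
have p : 0 < (2 ^ K)%:R :> R by rewrite ltr0n expn_gt0.
rewrite /w ltr_pdivrMr //.
have e1 : eta * (t / eta * (2 ^ K)%:R) = t * (2 ^ K)%:R.
  by field; rewrite lt0r_neq0.
by rewrite -e1 -[X in X < _]mulr1 ltr_pM2l.
Qed.

Lemma gn_ge (a b : R) : 0 <= a -> 0 <= b -> a <= Num.sqrt (a ^+ 2 + b ^+ 2).
Proof.
move=> a0 b0; apply: (le_trans (_ : a <= Num.sqrt (a ^+ 2))).
  by rewrite sqrtr_sqr ger0_norm.
by rewrite ler_wsqrtr // lerDl sqr_ge0.
Qed.
End Helpers.

Section Adj.
Variables (R : realType) (V : lmodType R[i]) (ip : V -> V -> R[i]).
Hypothesis Hip : inner_product ip.
Local Notation N := (N ip).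

Lemma adj_val D f Ds fs : is_adjoint ip D f Ds fs ->
  forall v, Ds v -> forall u, D u -> ip (f u) v = ip u (fs v).
Proof. by move=> adj v Dv; apply/(adj v (fs v)). Qed.

Lemma adj_lin D f Ds fs : is_adjoint ip D f Ds fs ->
  forall a v v', Ds v -> Ds v' -> Ds (a *: v + v') /\ fs (a *: v + v') = a *: fs v + fs v'.
Proof.
move=> adj a v v' Dv Dv'; apply/adj => u Du.
rewrite (ipDr Hip) (ipZr Hip) (ipDr Hip) (ipZr Hip).
by rewrite (adj_val adj Dv Du) (adj_val adj Dv' Du).
Qed.

Lemma gn_ge1 (f : V -> V) u : N u <= graph_norm ip f u.
Proof. by apply: gn_ge; apply: N_ge0. Qed.
Lemma gn_ge2 (f : V -> V) u : N (f u) <= graph_norm ip f u.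
Proof. rewrite /graph_norm addrC; by apply: gn_ge; apply: N_ge0. Qed.

Lemma N_rscale (r : R) x : 0 <= r -> N (r%:C%C *: x) = r * N x.
Proof. by move=> r0; rewrite (N_scale Hip) nc_real ger0_norm. Qed.

Lemma N_trim x y : N (x - y) <= N x + N y.
Proof. by rewrite -(N_opp Hip y); apply: (N_tri Hip). Qed.
End Adj.

Lemma bd_nn (R : realType) (V W : lmodType R[i]) (ipV : V -> V -> R[i]) (ipW : W -> W -> R[i]) f :
  bounded_map ipV ipW f -> exists c, 0 <= c /\ forall x, hnorm ipW (f x) <= c * hnorm ipV x.
Proof.
move=> [c hc]; exists (Num.max c 0); split; first by rewrite le_max lexx orbT.
move=> x; apply: (le_trans (hc x)); rewrite ler_wpM2r ?sqrtr_ge0 //.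
by rewrite le_max lexx.
Qed.

Section LinF.
Variables (R : realType) (V W : lmodType R[i]) (F : V -> W).
Hypothesis Hl : forall a x y, F (a *: x + y) = a *: F x + F y.
Lemma linF0 : F 0 = 0.
Proof.
have h := Hl 1 0 0; rewrite scaler0 addr0 scale1r in h.
by apply: (@addrI _ (F 0)); rewrite addr0 -h.
Qed.
Lemma linFZ a x : F (a *: x) = a *: F x.
Proof. by rewrite -[a *: x]addr0 Hl linF0 addr0. Qed.
Lemma linFD x y : F (x + y) = F x + F y.
Proof. by rewrite -[x]scale1r Hl !scale1r. Qed.
Lemma linFN x : F (- x) = - F x.
Proof. by rewrite -scaleN1r linFZ scaleN1r. Qed.
Lemma linFB x y : F (x - y) = F x - F y.
Proof. by rewrite linFD linFN. Qed.
End LinF.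

Lemma z1 (V : zmodType) (f f0 g1 g2 : V) : f - (g1 - g2) = (f0 + f - g1) - (f0 - g2).
Proof. by rewrite [f0 + f]addrC addrAC addrKA opprK opprB [g2 - g1]addrC addrA addrAC. Qed.
Lemma z2 (V : zmodType) (f a b : V) : (f - (a - b)) - (f - a) = b.
Proof. by rewrite opprB [f + _]addrC addrKA opprK subrK. Qed.
Lemma z3 (V : zmodType) (f a : V) : f - (f - a) = a.
Proof. by rewrite opprB addrC subrK. Qed.

Lemma rcV (R : realType) (a : R) : ((a^-1)%:C%C : R[i]) = (a%:C%C)^-1.
Proof. by rewrite fmorphV. Qed.
Lemma rc_neq0 (R : realType) (a : R) : a != 0 -> (a%:C%C : R[i]) != 0.
Proof. by apply: contra => /eqP [->]. Qed.

Lemma ad0 (R : realType) (K : lmodType R[i]) (ipK : K -> K -> R[i]) (phi : K -> R[i]) :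
  antidual ipK phi -> phi 0 = 0.
Proof.
move=> [hl _]; have h := hl 1 0 0; rewrite scaler0 addr0 in h.
have : phi 0 = phi 0 + phi 0 by rewrite {1}h (_ : conjc 1 = 1) ?mul1r //; exact: (conjc1 R).
by move=> h2; apply: (@addrI _ (phi 0)); rewrite addr0 -h2.
Qed.

Unset Implicit Arguments.

Theorem lemma4p9
  (R : realType)
  (* the Hilbert spaces H0, H1, K^∂ (= Kd), K, with their inner products *)
  (H0 H1 Kd K : lmodType R[i])
  (ip0 : H0 -> H0 -> R[i]) (ip1 : H1 -> H1 -> R[i])
  (ipd : Kd -> Kd -> R[i]) (ipK : K -> K -> R[i])
  (hH0 : hilbert ip0) (sH0 : separable ip0) (hH1 : hilbert ip1)
  (hKd : hilbert ipd) (sKd : separable ipd) (hK : hilbert ipK)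
  (* H1 ⊂ H0 dense, bounded inclusion *)
  (i1 : {linear H1 -> H0}) (i1_inj : injective i1)
  (i1_bd : bounded_map ip1 ip0 i1)
  (i1_dense : dense_in ip0 (fun f => exists h, f = i1 h))
  (* K ⊂ K^∂ dense, bounded inclusion *)
  (iK : {linear K -> Kd}) (iK_inj : injective iK)
  (iK_bd : bounded_map ipK ipd iK)
  (iK_dense : dense_in ipd (fun y => exists x, y = iK x))
  (* T closed, densely defined, symmetric *)
  (DT : H0 -> Prop) (Tf : H0 -> H0)
  (T_sub : subspace DT) (T_lin : linear_on DT Tf) (T_dense : dense_in ip0 DT)
  (T_sym : symmetric_op ip0 DT Tf) (T_closed : closed_op ip0 DT Tf)
  (* T_star is the adjoint of T *)
  (DTs : H0 -> Prop) (Tsf : H0 -> H0)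
  (Ts_adj : is_adjoint ip0 DT Tf DTs Tsf)
  (* standing assumptions *)
  (H1_sub : forall h, DTs (i1 h))
  (H1_dense_graph : forall u, DTs u -> forall e : R, 0 < e ->
      exists h, graph_norm ip0 Tsf (u - i1 h) < e)
  (Ts_H1_bd : bounded_map ip1 ip0 (fun h => Tsf (i1 h)))
  (g0 g1 : {linear H1 -> K})
  (g0_bd : bounded_map ip1 ipK g0) (g1_bd : bounded_map ip1 ipK g1)
  (g_surj : forall a b : K, exists h, g0 h = a /\ g1 h = b)
  (kerg_dense : dense_in ip0 (fun f => exists h, [/\ g0 h = 0, g1 h = 0 & f = i1 h]))
  (DT_kerg : forall f, DT f <-> exists h, [/\ g0 h = 0, g1 h = 0 & f = i1 h])
  (lagrange : forall h g : H1,
      ip0 (Tsf (i1 h)) (i1 g) - ip0 (i1 h) (Tsf (i1 g)) =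
      ipd (iK (g1 h)) (iK (g0 g)) - ipd (iK (g0 h)) (iK (g1 g)))
  (* Γ0, Γ1 : D(T_star) -> K' : the continuous extensions of γ0, γ1;
     An element of K' is represented by the anti-linear functional K -> C *)
  (G0 G1 : H0 -> K -> R[i])
  (G0_val : forall u, DTs u -> antidual ipK (G0 u))
  (G1_val : forall u, DTs u -> antidual ipK (G1 u))
  (G0_lin : forall (a : R[i]) u v x, DTs u -> DTs v ->
      G0 (a *: u + v) x = a * G0 u x + G0 v x)
  (G1_lin : forall (a : R[i]) u v x, DTs u -> DTs v ->
      G1 (a *: u + v) x = a * G1 u x + G1 v x)
  (G0_bd : exists c : R, forall u x, DTs u ->
      ComplexField.Normc.normc (G0 u x) <= c * graph_norm ip0 Tsf u * hnorm ipK x)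
  (G1_bd : exists c : R, forall u x, DTs u ->
      ComplexField.Normc.normc (G1 u x) <= c * graph_norm ip0 Tsf u * hnorm ipK x)
  (G0_ext : forall h x, G0 (i1 h) x = ipd (iK (g0 h)) (iK x))
  (G1_ext : forall h x, G1 (i1 h) x = ipd (iK (g1 h)) (iK x))
  (* A self-adjoint, T ⊂ A ⊂ T_star, D(A) = Ker γ0, bounded everywhere defined inverse *)
  (DA : H0 -> Prop) (Af : H0 -> H0)
  (A_dense : dense_in ip0 DA) (A_sa : is_adjoint ip0 DA Af DA Af)
  (T_A : op_ext DT Tf DA Af) (A_Ts : op_ext DA Af DTs Tsf)
  (DA_kerg0 : forall f, DA f <-> exists h, g0 h = 0 /\ f = i1 h)
  (A_inv : exists B : H0 -> H0, [/\ bounded_map ip0 ip0 B,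
      (forall f, DA (B f) /\ Af (B f) = f) &
      (forall u, DA u -> B (Af u) = u)]) :
  (* Γ0 ⊕ bold Γ1 : D(T_star) -> K' ⊕ K is surjective, where
     bold Γ1 u = Γ1 u - M(0) Γ0 u = Γ1 u - Γ1 z, z ∈ Ker T_star with Γ0 z = Γ0 u *)
  forall (phi : K -> R[i]), antidual ipK phi -> forall psi : K,
    exists u, [/\ DTs u,
      (forall x, G0 u x = phi x),
      (exists z, [/\ DTs z, Tsf z = 0 & forall x, G0 z x = G0 u x]) &
      (forall z, DTs z -> Tsf z = 0 -> (forall x, G0 z x = G0 u x) ->
         forall x, G1 u x - G1 z x = ipd (iK psi) (iK x))].
Proof.
move=> phi [phi_lin [cphi phi_bd]] psi.
have [Hip0 Hc0] := hH0.
have [HipK HcK] := hK.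
have [Hipd _] := hKd.
have Ts_lin := adj_lin Hip0 Ts_adj.
have A_lin := adj_lin Hip0 A_sa.
have [B [Bbd BA AB]] := A_inv.
have [cB [cB0 hB]] := bd_nn Bbd.
have [cK [cK0 hiK]] := bd_nn iK_bd.
have DA_B f : DA (B f) by case: (BA f).
have AfB f : Af (B f) = f by case: (BA f).
have TsB f : Tsf (B f) = f by have [_ ->] := A_Ts _ (DA_B f); rewrite AfB.
have DTsB f : DTs (B f) by case: (A_Ts _ (DA_B f)).
have B_lin a f g : B (a *: f + g) = a *: B f + B g.
  have [D1 E1] := A_lin a (B f) (B g) (DA_B f) (DA_B g).
  by rewrite -{1}(AfB f) -{1}(AfB g) -E1 (AB _ D1).
have PhiE : forall f, exists h, g0 h = 0 /\ B f = i1 h by move=> f; apply/DA_kerg0.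
have [Phi hPhi] := choice PhiE.
have i1Phi f : i1 (Phi f) = B f by case: (hPhi f).
have g0Phi f : g0 (Phi f) = 0 by case: (hPhi f).
have Phi_lin a f g : Phi (a *: f + g) = a *: Phi f + Phi g.
  by apply: i1_inj; rewrite linearP /= !i1Phi B_lin.
pose Psi f := g1 (Phi f).
have Psi_lin a f g : Psi (a *: f + g) = a *: Psi f + Psi g by rewrite /Psi Phi_lin linearP.
have key f wv : ipd (iK (Psi f)) (iK (g0 wv)) = ip0 f (i1 wv) - ip0 (B f) (Tsf (i1 wv)).
  have := lagrange (Phi f) wv.
  by rewrite g0Phi linear0 (ip0l Hipd) subr0 i1Phi TsB.
have Psi0 := linF0 Psi_lin.
have PsiB := linFB Psi_lin.
have cg : forall f y, (forall e : R, 0 < e -> exists f',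
    N ip0 (f - f') < e /\ N ipK (y - Psi f') < e) -> Psi f = y.
  move=> f y hf.
  have X0 : forall wv, ipd (iK (y - Psi f)) (iK (g0 wv)) = 0.
    move=> wv; apply: nc_eq0.
    apply: (@le0_eps _ _ (cK * N ipd (iK (g0 wv)) + N ip0 (i1 wv) + cB * N ip0 (Tsf (i1 wv)))) => e e0.
    have [f' [h1 h2]] := hf e e0.
    have eq : ipd (iK (y - Psi f)) (iK (g0 wv)) = ipd (iK (y - Psi f')) (iK (g0 wv))
        + (ip0 (f' - f) (i1 wv) - ip0 (B (f' - f)) (Tsf (i1 wv))).
      rewrite -key PsiB -(ipDl Hipd) -linearD; congr (ipd (iK _) _).
      by rewrite addrA subrK.
    rewrite eq.
    have b1 := CS Hipd (iK (y - Psi f')) (iK (g0 wv)).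
    have b2 := CS Hip0 (f' - f) (i1 wv).
    have b3 := CS Hip0 (B (f' - f)) (Tsf (i1 wv)).
    have b4 := hiK (y - Psi f').
    have b5 := hB (f' - f).
    have s1 : N ip0 (f' - f) < e by rewrite (N_symB Hip0).
    have c1 := ncD (ipd (iK (y - Psi f')) (iK (g0 wv))) (ip0 (f' - f) (i1 wv) - ip0 (B (f' - f)) (Tsf (i1 wv))).
    have c2 := ncB (ip0 (f' - f) (i1 wv)) (ip0 (B (f' - f)) (Tsf (i1 wv))).
    have n1 := N_ge0 ipd (iK (g0 wv)); have n2 := N_ge0 ip0 (i1 wv).
    have n3 := N_ge0 ip0 (Tsf (i1 wv)); have n4 := N_ge0 ipK (y - Psi f').
    have n5 := N_ge0 ip0 (f' - f).
    have u1 : N ipd (iK (y - Psi f')) <= cK * e by nra.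
    have u2 : N ip0 (B (f' - f)) <= cB * e by nra.
    have t1 : N ipd (iK (y - Psi f')) * N ipd (iK (g0 wv)) <= e * (cK * N ipd (iK (g0 wv))) by nra.
    have t2 : N ip0 (f' - f) * N ip0 (i1 wv) <= e * N ip0 (i1 wv) by nra.
    have t3 : N ip0 (B (f' - f)) * N ip0 (Tsf (i1 wv)) <= e * (cB * N ip0 (Tsf (i1 wv))) by nra.
    rewrite !mulrDr; lra.
  have [wv [hw _]] := g_surj (y - Psi f) 0.
  have := X0 wv; rewrite hw => /(ip_def Hipd) h.
  have : y - Psi f = 0 by apply: iK_inj; rewrite h linear0.
  by move/eqP; rewrite subr_eq0 => /eqP.
have [M [M0 PsiBd]] : exists M, 0 <= M /\ forall f, N ipK (Psi f) <= M * N ip0 f.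
  have cov : forall f, exists n, (fun n f => N ipK (Psi f) <= n%:R) n f.
    move=> f; exists (Num.Def.archi_bound (N ipK (Psi f))).
    exact: ltW (archi_boundP (N_ge0 ipK _)).
  have [n [f0 [r [r0 hr]]]] := baire Hip0 Hc0 cov.
  have hr2 : forall f, N ip0 f < r -> forall e : R, 0 < e ->
      exists g, N ipK (Psi g) <= 2 * n%:R /\ N ip0 (f - g) < e.
    move=> f fr e e0.
    have e2 : 0 < e / 2 by rewrite divr_gt0.
    have f1 : N ip0 (f0 + f - f0) < r by rewrite addrAC subrr add0r.
    have f2 : N ip0 (f0 - f0) < r by rewrite subrr (N_0 Hip0).
    have [q1 [hq1 dq1]] := hr _ f1 _ e2.
    have [q2 [hq2 dq2]] := hr _ f2 _ e2.
    simpl in hq1, hq2.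
    exists (q1 - q2); split.
      by rewrite PsiB; have := N_trim HipK (Psi q1) (Psi q2); lra.
    by rewrite (z1 _ f0); have := N_trim Hip0 (f0 + f - q1) (f0 - q2); lra.
  pose M := 4 * n%:R / r.
  have M0 : 0 <= M by rewrite /M divr_ge0 ?mulr_ge0 ?ler0n // ltW.
  have hr3 : forall f (e : R), 0 < e ->
      exists g, N ipK (Psi g) <= M * N ip0 f /\ N ip0 (f - g) < e.
    move=> f e e0.
    have [->|fnz] := eqVneq f 0.
      by exists 0; rewrite Psi0 subrr (N_0 HipK) (N_0 Hip0) mulr0 lexx.
    have Nf : 0 < N ip0 f.
      rewrite lt_def N_ge0 andbT; apply/eqP => /(N_eq0 Hip0) f0'.
      by rewrite f0' eqxx in fnz.
    pose lam := r / (2 * N ip0 f).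
    have lam0 : 0 < lam by rewrite divr_gt0 // mulr_gt0.
    have lam0' : 0 <= lam by exact: ltW.
    have lamI0 : 0 <= lam^-1 by rewrite invr_ge0.
    have Nf' : N ip0 (lam%:C%C *: f) < r.
      rewrite (N_rscale Hip0 _ lam0') /lam.
      have -> : r / (2 * N ip0 f) * N ip0 f = r / 2 by field; rewrite lt0r_neq0.
      lra.
    have [g' [hg' dg']] := hr2 _ Nf' (lam * e) (mulr_gt0 lam0 e0).
    exists ((lam^-1)%:C%C *: g'); split.
      rewrite (linFZ Psi_lin) (N_rscale HipK _ lamI0).
      have : lam^-1 * N ipK (Psi g') <= lam^-1 * (2 * n%:R) by rewrite ler_wpM2l.
      have -> : lam^-1 * (2 * n%:R) = M * N ip0 f.
        by rewrite /lam /M; field; rewrite !lt0r_neq0.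
      done.
    have -> : f - (lam^-1)%:C%C *: g' = (lam^-1)%:C%C *: (lam%:C%C *: f - g').
      by rewrite scalerBr scalerA rcV mulVf ?rc_neq0 ?lt0r_neq0 // scale1r.
    rewrite (N_rscale Hip0 _ lamI0).
    have -> : e = lam^-1 * (lam * e) by rewrite mulrA mulVf ?lt0r_neq0 // mul1r.
    by rewrite ltr_pM2l ?invr_gt0.
  have bdeta : forall f (eta : R), 0 < eta -> N ipK (Psi f) <= M * N ip0 f + M * eta.
    move=> f eta eta0.
    have pickE : forall p : nat * H0, exists g,
        N ipK (Psi g) <= M * N ip0 p.2 /\ N ip0 (p.2 - g) < w eta p.1.+1.
      by move=> [k e]; exact: hr3 e _ (w_gt0 _ eta0).
    have [pk hpk] := choice pickE.
    pose res := rec_seq f (fun k e => e - pk (k, e)).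
    have resS k : res k.+1 = res k - pk (k, res k) by [].
    pose u k := Psi (f - res k).
    have ures k : u k.+1 - u k = Psi (pk (k, res k)).
      by rewrite /u -PsiB resS z2.
    have resb k : N ip0 (res k.+1) < w eta k.+1.
      by rewrite resS; case: (hpk (k, res k)).
    have stepb k : N ipK (u k.+1 - u k) <= M * N ip0 (res k).
      by rewrite ures; case: (hpk (k, res k)).
    have tel : forall d k, N ipK (u (k + d).+1 - u k.+1) <= 2 * M * (w eta k.+1 - w eta (k + d).+1).
      elim=> [|d IH] k.
        by rewrite addn0 subrr (N_0 HipK) subrr mulr0.
      rewrite addnS.
      have h1 := N_tri3 HipK (u (k + d).+2) (u (k + d).+1) (u k.+1).
      have h2 := stepb (k + d).+1.
      have h3 := resb (k + d)%N.
      have h4 := wS eta (k + d).+1.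
      have h5 := IH k.
      have h6 : M * N ip0 (res (k + d).+1) <= M * w eta (k + d).+1 by rewrite ler_wpM2l // ltW.
      rewrite h4; lra.
    have u0 : u 0%N = 0 by rewrite /u /= subrr Psi0.
    have u1b : N ipK (u 1%N) <= M * N ip0 f by have := stepb 0%N; rewrite u0 subr0.
    have tel' : forall j, (1 <= j)%N -> N ipK (u j - u 1%N) <= M * eta.
      move=> j j1; have := tel (j.-1) 0%N; rewrite add0n prednK //.
      have := w_gt0 j eta0; have := wS eta 0%N; rewrite /w expn0 divr1 => h1 h2.
      rewrite h1 /w => h3.
      have := w_gt0 j eta0; rewrite /w => h4; nra.
    have cau : cauchy ipK u.
      move=> e e0.
      have e4 : 0 < e / (4 * M + 1) by rewrite divr_gt0 //; lra.
      have [Kq hKq] := w_small eta0 e4.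
      exists Kq.+1 => mm nn mK nK.
      change (N ipK (u mm - u nn) < e).
      have hm := tel (mm - Kq.+1)%N Kq; have hn := tel (nn - Kq.+1)%N Kq.
      rewrite -addSn subnKC // in hm; rewrite -addSn subnKC // in hn.
      have := N_tri3 HipK (u mm) (u Kq.+1) (u nn); rewrite (N_symB HipK (u Kq.+1) (u nn)).
      have := hKq Kq.+1 (leqnSn Kq).
      have := w_gt0 mm eta0; have := w_gt0 nn eta0.
      have : (e / (4 * M + 1)) * (4 * M + 1) = e by field; rewrite lt0r_neq0 //; lra.
      move=> q1 q2 q3 q4 q5; nra.
    have [y hy] := HcK _ cau.
    have Py : Psi f = y.
      apply: cg => e e0.
      have [K1 hK1] := hy e e0.
      have [K2 hK2] := w_small eta0 e0.
      exists (f - res (maxn K1 K2).+1); split.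
        rewrite z3; apply: (lt_trans (resb _)); apply: hK2.
        exact: leq_trans (leq_maxr _ _) (leqnSn _).
      have := hK1 (maxn K1 K2).+1 (leq_trans (leq_maxl _ _) (leqnSn _)).
      by rewrite (N_symB HipK).
    rewrite Py; apply: le_eps => e e0.
    have [K1 hK1] := hy e e0.
    have := hK1 K1.+1 (leqnSn _).
    have := tel' K1.+1 isT.
    have := N_tri3 HipK y (u K1.+1) 0.
    have := N_tri3 HipK (u K1.+1) (u 1%N) 0.
    rewrite !subr0 (N_symB HipK y).
    change (hnorm ipK (u K1.+1 - y)) with (N ipK (u K1.+1 - y)).
    lra.
  exists M; split => // f.
  apply: le_eps => e e0.
  have h := bdeta f (e / (M + 1)) (divr_gt0 e0 (ltr_pwDr ltr01 M0)).
  have : M * (e / (M + 1)) <= e.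
    have M1 : 0 < M + 1 by lra.
    have q2 : M / (M + 1) <= 1 by rewrite ler_pdivrMr // mul1r; lra.
    rewrite mulrCA; have := ler_wpM2l (ltW e0) q2; rewrite mulr1.
    by [].
  lra.
have [c0 [c00 hc0]] : exists c, 0 <= c /\ forall u x, DTs u ->
    ComplexField.Normc.normc (G0 u x) <= c * graph_norm ip0 Tsf u * N ipK x.
  case: G0_bd => c hc; exists (Num.max c 0); split; first by rewrite le_max lexx orbT.
  move=> u x Du; apply: (le_trans (hc u x Du)).
  by rewrite ler_wpM2r ?N_ge0 // ler_wpM2r ?sqrtr_ge0 // le_max lexx.
have [c1 [c10 hc1]] : exists c, 0 <= c /\ forall u x, DTs u ->
    ComplexField.Normc.normc (G1 u x) <= c * graph_norm ip0 Tsf u * N ipK x.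
  case: G1_bd => c hc; exists (Num.max c 0); split; first by rewrite le_max lexx orbT.
  move=> u x Du; apply: (le_trans (hc u x Du)).
  by rewrite ler_wpM2r ?N_ge0 // ler_wpM2r ?sqrtr_ge0 // le_max lexx.
have lagx : forall u gg, DTs u -> ip0 (Tsf u) (i1 gg) - ip0 u (Tsf (i1 gg)) = G1 u (g0 gg) - G0 u (g1 gg).
  move=> u gg Du.
  apply/eqP; rewrite -subr_eq0; apply/eqP; apply: nc_eq0.
  apply: (@le0_eps _ _ (N ip0 (i1 gg) + N ip0 (Tsf (i1 gg)) + c1 * N ipK (g0 gg) + c0 * N ipK (g1 gg))) => e e0.
  have [h hh] := H1_dense_graph u Du e e0.
  have Dv : DTs (u - i1 h).
    by have [D1 _] := Ts_lin (-1) (i1 h) u (H1_sub h) Du; rewrite scaleN1r addrC in D1.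
  have uv : u = 1 *: (u - i1 h) + i1 h by rewrite scale1r subrK.
  have [_ Tsu] := Ts_lin 1 (u - i1 h) (i1 h) Dv (H1_sub h).
  rewrite -uv scale1r in Tsu.
  have G0u := G0_lin 1 (u - i1 h) (i1 h) (g1 gg) Dv (H1_sub h); rewrite -uv mul1r in G0u.
  have G1u := G1_lin 1 (u - i1 h) (i1 h) (g0 gg) Dv (H1_sub h); rewrite -uv mul1r in G1u.
  have L := lagrange h gg; rewrite -G0_ext -G1_ext in L.
  have L' : ip0 (Tsf (i1 h)) (i1 gg) = ip0 (i1 h) (Tsf (i1 gg)) + (G1 (i1 h) (g0 gg) - G0 (i1 h) (g1 gg)).
    by rewrite -L addrC subrK.
  set v := u - i1 h in Dv uv Tsu G0u G1u hh.
  rewrite Tsu G0u G1u uv (ipDl Hip0) (ipDl Hip0) scale1r L'.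
  have -> : ip0 (Tsf v) (i1 gg) + (ip0 (i1 h) (Tsf (i1 gg)) + (G1 (i1 h) (g0 gg) - G0 (i1 h) (g1 gg))) -
      (ip0 v (Tsf (i1 gg)) + ip0 (i1 h) (Tsf (i1 gg))) - (G1 v (g0 gg) + G1 (i1 h) (g0 gg) - (G0 v (g1 gg) + G0 (i1 h) (g1 gg)))
      = ip0 (Tsf v) (i1 gg) - ip0 v (Tsf (i1 gg)) - (G1 v (g0 gg) - G0 v (g1 gg)) by ring.
  have b1 := ncB (ip0 (Tsf v) (i1 gg) - ip0 v (Tsf (i1 gg))) (G1 v (g0 gg) - G0 v (g1 gg)).
  have b2 := ncB (ip0 (Tsf v) (i1 gg)) (ip0 v (Tsf (i1 gg))).
  have b3 := ncB (G1 v (g0 gg)) (G0 v (g1 gg)).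
  have b4 := CS Hip0 (Tsf v) (i1 gg).
  have b5 := CS Hip0 v (Tsf (i1 gg)).
  have b6 := hc1 v (g0 gg) Dv.
  have b7 := hc0 v (g1 gg) Dv.
  have g1' := gn_ge1 ip0 Tsf v; have g2' := gn_ge2 ip0 Tsf v.
  have n1 := N_ge0 ip0 (i1 gg); have n2 := N_ge0 ip0 (Tsf (i1 gg)).
  have n3 := N_ge0 ipK (g0 gg); have n4 := N_ge0 ipK (g1 gg).
  have gv0 : 0 <= graph_norm ip0 Tsf v by exact: sqrtr_ge0.
  have t1 : N ip0 (Tsf v) * N ip0 (i1 gg) <= e * N ip0 (i1 gg) by nra.
  have t2 : N ip0 v * N ip0 (Tsf (i1 gg)) <= e * N ip0 (Tsf (i1 gg)) by nra.
  have t3 : c1 * graph_norm ip0 Tsf v * N ipK (g0 gg) <= e * (c1 * N ipK (g0 gg)).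
    have := mulr_ge0 c10 n3; nra.
  have t4 : c0 * graph_norm ip0 Tsf v * N ipK (g1 gg) <= e * (c0 * N ipK (g1 gg)).
    have := mulr_ge0 c00 n4; nra.
  rewrite !mulrDr; lra.
have [cph [cph0 phbd]] : exists c, 0 <= c /\ forall x, ComplexField.Normc.normc (phi x) <= c * N ipK x.
  exists (Num.max cphi 0); split; first by rewrite le_max lexx orbT.
  move=> x; apply: (le_trans (phi_bd x)).
  by rewrite ler_wpM2r ?N_ge0 // le_max lexx.
have phi0 : phi 0 = 0 by apply: (ad0 (ipK := ipK)); split => //; exists cphi.
pose l f := conjc (phi (Psi f)).
have l_lin : forall a x y, l (a *: x + y) = a * l x + l y.
  by move=> a x y; rewrite /l Psi_lin phi_lin cjD cjM conjcK.
have l_bd : forall x, ComplexField.Normc.normc (l x) <= (cph * M) * N ip0 x.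
  move=> x; rewrite /l nc_cjc; apply: (le_trans (phbd _)); rewrite -mulrA ler_wpM2l //.
have [z hz] := riesz Hip0 Hc0 l_lin l_bd.
have hz' f : phi (Psi f) = ip0 z f.
  by rewrite (ip_sym Hip0 f z) -hz /l conjcK.
have PsiA h : g0 h = 0 -> Psi (Af (i1 h)) = g1 h.
  move=> gh; have Dh : DA (i1 h) by apply/DA_kerg0; exists h.
  by rewrite /Psi; congr (g1 _); apply: i1_inj; rewrite i1Phi AB.
have [Dz Tz] : DTs z /\ Tsf z = 0.
  apply/Ts_adj => u Du.
  have [h [gh0 gh1 uh]] := (proj1 (DT_kerg u)) Du.
  have [_ <-] := T_A _ Du.
  rewrite (ip0r Hip0) uh (ip_sym Hip0 z) -hz' PsiA // gh1 phi0.
  exact: cj0.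
have G1z0 : G1 z 0 = 0 by apply: (ad0 (ipK := ipK)); exact: G1_val.
have G0z x : G0 z x = phi x.
  have [h [gh0 gh1]] := g_surj 0 x.
  have Dh : DA (i1 h) by apply/DA_kerg0; exists h.
  have := lagx z h Dz; rewrite Tz (ip0l Hip0) gh0 G1z0 !sub0r => /eqP; rewrite eqr_opp => /eqP.
  have [_ ->] := A_Ts _ Dh.
  by rewrite -hz' PsiA // gh1 => ->.
have inj : forall z', DTs z' -> Tsf z' = 0 -> (forall x, G0 z' x = 0) -> z' = 0.
  move=> z' D' T' G'.
  have G1z'0 : G1 z' 0 = 0 by apply: (ad0 (ipK := ipK)); exact: G1_val.
  have all0 f : ip0 z' f = 0.
    have := lagx z' (Phi f) D'; rewrite T' (ip0l Hip0) g0Phi G' G1z'0 i1Phi TsB subrr sub0r.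
    by move/eqP; rewrite oppr_eq0 => /eqP.
  exact: (ip_def Hip0 (all0 z')).
have [hp [hp0 hp1]] := g_surj 0 psi.
have Dhp : DTs (i1 hp) := H1_sub hp.
exists (z + i1 hp).
have Du : DTs (z + i1 hp) by have := (Ts_lin 1 z (i1 hp) Dz Dhp).1; rewrite scale1r.
have G0u x : G0 (z + i1 hp) x = phi x.
  have := G0_lin 1 z (i1 hp) x Dz Dhp.
  by rewrite scale1r mul1r G0_ext hp0 linear0 (ip0l Hipd) addr0 G0z.
have G1u x : G1 (z + i1 hp) x = G1 z x + ipd (iK psi) (iK x).
  by have := G1_lin 1 z (i1 hp) x Dz Dhp; rewrite scale1r mul1r G1_ext hp1.
split => //.
  by exists z; split => // x; rewrite G0u G0z.
move=> z' D' T' G' x.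
have zz : z' = z.
  have [Dd Td] := Ts_lin (-1) z z' Dz D'.
  have : (-1) *: z + z' = 0.
    apply: inj => //; first by rewrite Td Tz T' scaler0 addr0.
    move=> y; rewrite G0_lin // G0z G' G0u; ring.
  by move/eqP; rewrite scaleN1r addrC subr_eq0 => /eqP.
by rewrite zz G1u addrAC subrr add0r.
Qed.
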